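(* For every $n\ge3$, $c>0$ and $x\ge0$ we have $\gamma(x)>\frac95\sqrt{n-1}\,c$. Moreover $k_n>1.999\sqrt{n-1}$ for $5\le n\le 9$, and $k_{10}=6$.
   Context: Definition of $\gamma$: For $n\ge 3$, $c>0$ and $x\ge 0$ put $\alpha(x)=nc+\frac{n}{2(n-1)}x-\frac{n-2}{2(n-1)}\sqrt{x^2+4(n-1)cx}$, $y_n=4(1-n)+\frac{2(n^2-4)}{\sqrt{2n-5}}\cos\!\left(\frac13\arctan\frac{n^2-4n+6}{2(n-1)\sqrt{2n-5}}\right)$, $x_0=y_nc$, $\beta(x)=\alpha(x_0)+\alpha'(x_0)(x-x_0)+\frac12\alpha''(x_0)(x-x_0)^2$, and $\gamma(x)=\alpha(x)$ for $x\ge x_0$, $\gamma(x)=\beta(x)$ for $0\le x<x_0$. Definition of $k_n$: with $\alpha_1(x)=n+\frac{n}{2(n-1)}x-\frac{n-2}{2(n-1)}\sqrt{x^2+4(n-1)x}$, set $k_3=\alpha_1(y_3)-\alpha_1'(y_3)y_3+\frac12\alpha_1''(y_3)y_3^2$ and, for $n\ge4$, $k_n=\alpha_1(y_n)-\frac{\alpha_1'(y_n)^2}{2\alpha_1''(y_n)}$. *)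

(* Defs.v *)
From Stdlib Require Import Reals Lra.
Open Scope R_scope.

Definition alpha (n : nat) (c x : R) : R :=
  INR n * c + INR n / (2 * (INR n - 1)) * x
  - (INR n - 2) / (2 * (INR n - 1)) * sqrt (x ^ 2 + 4 * (INR n - 1) * c * x).

(* First derivative of alpha in x (closed form, valid for x > 0). *)
Definition alpha_d1 (n : nat) (c x : R) : R :=
  INR n / (2 * (INR n - 1))
  - (INR n - 2) / (2 * (INR n - 1)) * (x + 2 * (INR n - 1) * c)
      / sqrt (x ^ 2 + 4 * (INR n - 1) * c * x).

(* Second derivative of alpha in x (closed form, valid for x > 0). *)
Definition alpha_d2 (n : nat) (c x : R) : R :=
  2 * (INR n - 2) * (INR n - 1) * c ^ 2
    / (sqrt (x ^ 2 + 4 * (INR n - 1) * c * x)) ^ 3.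

Definition y_n (n : nat) : R :=
  4 * (1 - INR n)
  + 2 * (INR n ^ 2 - 4) / sqrt (2 * INR n - 5)
    * cos (/ 3 * atan ((INR n ^ 2 - 4 * INR n + 6)
                        / (2 * (INR n - 1) * sqrt (2 * INR n - 5)))).

Definition x0 (n : nat) (c : R) : R := y_n n * c.

Definition beta (n : nat) (c x : R) : R :=
  alpha n c (x0 n c) + alpha_d1 n c (x0 n c) * (x - x0 n c)
  + / 2 * alpha_d2 n c (x0 n c) * (x - x0 n c) ^ 2.

Definition gamma (n : nat) (c x : R) : R :=
  if Rle_dec (x0 n c) x then alpha n c x else beta n c x.

Definition k_n (n : nat) : R :=
  if Nat.eqb n 3 then
    alpha 3 1 (y_n 3) - alpha_d1 3 1 (y_n 3) * y_n 3
    + / 2 * alpha_d2 3 1 (y_n 3) * y_n 3 ^ 2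
  else
    alpha n 1 (y_n n) - alpha_d1 n 1 (y_n n) ^ 2 / (2 * alpha_d2 n 1 (y_n n)).

(* Main.v *)
Require Import Defs.
From Stdlib Require Import Reals Lra Psatz.
Open Scope R_scope.

Lemma cos3 t : cos (3 * t) = 4 * cos t ^ 3 - 3 * cos t.
Proof.
  replace (3 * t) with (2 * t + t) by ring.
  rewrite cos_plus, sin_2a, cos_2a_cos.
  pose proof (sin2 t) as H. unfold Rsqr in H.
  replace (2 * sin t * cos t * sin t) with (2 * (sin t * sin t) * cos t) by ring.
  rewrite H. ring.
Qed.

Lemma y_cubic (n : nat) : (3 <= n)%nat ->
  0 <= y_n n + 4 * (INR n - 1) /\
  (2 * INR n - 5) * (y_n n + 4 * (INR n - 1)) ^ 3
  - 3 * (INR n ^ 2 - 4) ^ 2 * (y_n n + 4 * (INR n - 1))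
  - 4 * (INR n - 1) * (INR n ^ 2 - 4) ^ 2 = 0.
Proof.
  intro Hn.
  assert (HN : 3 <= INR n) by (replace 3 with (INR 3) by (simpl; ring); apply le_INR; exact Hn).
  set (N := INR n) in *.
  assert (Hs2 : 0 < 2 * N - 5) by lra.
  set (s := sqrt (2 * N - 5)).
  assert (Hs : 0 < s) by (apply sqrt_lt_R0; lra).
  assert (Hss : s * s = 2 * N - 5) by (apply sqrt_sqrt; lra).
  set (P := N ^ 2 - 4).
  assert (HP : 0 < P) by (unfold P; nra).
  set (Q := N ^ 2 - 4 * N + 6).
  set (D := 2 * (N - 1) * s).
  assert (HD : 0 < D) by (unfold D; nra).
  set (a := Q / D).
  assert (Ha : 0 < a) by (unfold a, Q; apply Rdiv_lt_0_compat; nra).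
  assert (Hsq : sqrt (1 + a²) = P / D).
  { apply sqrt_lem_1.
    - unfold Rsqr; nra.
    - apply Rlt_le, Rdiv_lt_0_compat; lra.
    - assert (E : P ^ 2 = D ^ 2 + Q ^ 2).
      { unfold D. replace ((2 * (N - 1) * s) ^ 2) with (4 * (N - 1) ^ 2 * (s * s)) by ring.
        rewrite Hss. unfold P, Q. ring. }
      unfold a, Rsqr. field_simplify_eq; [|lra]. nra. }
  assert (Hv : cos (atan a) = D / P).
  { rewrite cos_atan, Hsq. field. split; lra. }
  pose proof (atan_bound a) as [_ Hb].
  assert (Hpos : 0 < atan a) by (rewrite <- atan_0; apply atan_increasing; exact Ha).
  set (r := cos (/ 3 * atan a)).
  assert (Hr : 0 <= r).
  { unfold r; apply cos_ge_0; pose proof PI_RGT_0; nra. }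
  assert (Hc3 : 4 * r ^ 3 - 3 * r = D / P).
  { unfold r. rewrite <- cos3. replace (3 * (/ 3 * atan a)) with (atan a) by field. exact Hv. }
  assert (Hz : y_n n + 4 * (N - 1) = 2 * P / s * r).
  { unfold y_n. fold N. fold s. fold P. fold Q. unfold D in a. fold a. fold r. ring. }
  rewrite Hz. split.
  - apply Rmult_le_pos; [apply Rlt_le, Rdiv_lt_0_compat; lra | exact Hr].
  - assert (E2 : 4 * r ^ 3 * P = 3 * r * P + D) by (field_simplify_eq in Hc3; [lra | lra]).
    rewrite <- Hss. unfold D in E2.
    field_simplify_eq; [| lra].
    nra.
Qed.
Lemma cub_identity B K3 L z z' :
  z * (B * z' ^ 3 - K3 * z' - L) - z' * (B * z ^ 3 - K3 * z - L)
  = (z - z') * (- B * z * z' * (z + z') - L).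
Proof. ring. Qed.

Lemma bracket_hi B K3 L z zh : 0 < B -> 0 < L -> 0 <= z -> B * z ^ 3 - K3 * z - L = 0 ->
  0 <= zh -> 0 < B * zh ^ 3 - K3 * zh - L -> z < zh.
Proof.
  intros HB HL Hz Hg Hzh Hgh.
  destruct (Rlt_or_le z zh) as [H|H]; [exact H|exfalso].
  pose proof (cub_identity B K3 L z zh) as E. rewrite Hg in E.
  destruct (Req_dec z 0) as [Z|Z].
  - subst z. lra.
  - assert (0 < z) by lra.
    assert (X : (z - zh) * (- B * z * zh * (z + zh) - L) <= 0).
    { assert (0 <= B * z * zh * (z + zh)) by (repeat apply Rmult_le_pos; lra).
      assert (0 <= z - zh) by lra. nra. }
    nra.
Qed.

Lemma bracket_lo B K3 L z zl : 0 < B -> 0 < L -> 0 <= z -> B * z ^ 3 - K3 * z - L = 0 ->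
  0 <= zl -> B * zl ^ 3 - K3 * zl - L < 0 -> zl < z.
Proof.
  intros HB HL Hz Hg Hzl Hgl.
  destruct (Rlt_or_le zl z) as [H|H]; [exact H|exfalso].
  pose proof (cub_identity B K3 L z zl) as E. rewrite Hg in E.
  destruct (Req_dec z 0) as [Z|Z].
  - subst z. lra.
  - assert (0 < z) by lra.
    assert (X : 0 <= (z - zl) * (- B * z * zl * (z + zl) - L)).
    { assert (0 <= B * z * zl * (z + zl)) by (repeat apply Rmult_le_pos; lra).
      assert (z - zl <= 0) by lra. nra. }
    nra.
Qed.

Lemma cub_uniq B K3 L z z' : 0 < B -> 0 < L -> 0 <= z -> 0 <= z' ->
  B * z ^ 3 - K3 * z - L = 0 -> B * z' ^ 3 - K3 * z' - L = 0 -> z = z'.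
Proof.
  intros HB HL Hz Hz' Hg Hg'.
  pose proof (cub_identity B K3 L z z') as E. rewrite Hg, Hg' in E.
  assert (0 <= B * z * z' * (z + z')) by (repeat apply Rmult_le_pos; lra).
  assert (- B * z * z' * (z + z') - L < 0) by lra.
  nra.
Qed.

Lemma w_param (n : nat) (c y : R) : 2 <= INR n -> 0 < c -> 0 < y ->
  let m := INR n - 1 in
  let w := (y + 2 * m + sqrt (y ^ 2 + 4 * m * y)) / (2 * m) in
  1 < w /\ y = m * (w - 1) ^ 2 / w /\
  alpha n c (y * c) = c * (w + m / w) /\
  alpha_d1 n c (y * c) = (w ^ 2 - m) / (m * (w ^ 2 - 1)) /\
  alpha_d2 n c (y * c) = 2 * (m - 1) * w ^ 3 / (c * m ^ 2 * (w ^ 2 - 1) ^ 3).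
Proof.
  intros HN Hc Hy m w.
  assert (Hm : 1 <= m) by (unfold m; lra).
  set (S1 := sqrt (y ^ 2 + 4 * m * y)) in w.
  assert (HS1 : 0 < S1) by (apply sqrt_lt_R0; nra).
  assert (HS1s : S1 * S1 = y ^ 2 + 4 * m * y) by (apply sqrt_sqrt; nra).
  assert (HS : sqrt ((y * c) ^ 2 + 4 * (INR n - 1) * c * (y * c)) = c * S1).
  { apply sqrt_lem_1; [nra | nra |]. fold m. nra. }
  assert (Hw : 1 < w).
  { unfold w. apply (Rmult_lt_reg_r (2 * m)); [lra|]. field_simplify; lra. }
  assert (Hyw : y * w = m * (w - 1) ^ 2).
  { unfold w. field_simplify_eq; [nra | lra]. }
  assert (HSw : S1 * w = m * (w ^ 2 - 1)).
  { unfold w. field_simplify_eq; [nra | lra]. }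
  assert (Ey : y = m * (w - 1) ^ 2 / w) by (rewrite <- Hyw; field; lra).
  assert (ES : S1 = m * (w ^ 2 - 1) / w) by (rewrite <- HSw; field; lra).
  clearbody w.
  assert (EN : INR n = m + 1) by (unfold m; ring).
  unfold alpha, alpha_d1, alpha_d2. rewrite HS. clearbody S1. clearbody m.
  rewrite EN. rewrite ES. rewrite Ey.
  assert (w ^ 2 - 1 <> 0) by nra.
  repeat split; try lra; try (field; repeat split; lra).
  all: idtac.
Qed.
Lemma div_nonneg a b : 0 <= a -> 0 < b -> 0 <= a / b.
Proof. intros; unfold Rdiv; apply Rmult_le_pos; [lra | left; apply Rinv_0_lt_compat; lra]. Qed.

Lemma ptau t : 9/10 <= t <= 5/4 -> 0 < 8*t^2 + 8 - 3*(t^2-1)^2 - 72/5*t.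
Proof. intros [H1 H2].
  assert (A : 0 <= (t - 9/10)*(5/4 - t)) by nra.
  assert (B : 0 <= (t - 9/10)*(5/4 - t)*t*t) by (apply Rmult_le_pos; [apply Rmult_le_pos|]; nra).
  assert (C : 0 <= (t - 9/10)*(5/4 - t)*t) by (apply Rmult_le_pos; nra).
  nra. Qed.

Lemma V_gen u w : 17/10 <= u -> 3 <= u*u -> 9/10*u <= w <= 5/4*u ->
  w + u*u/w - (w^2-u*u)^2*(w^2-1)/(4*(u*u-1)*w^3) > 9/5*u.
Proof.
  intros Hu Hm [H1 H2].
  assert (Hw : 0 < w) by lra.
  set (m := u*u) in *.
  assert (T1 : (w^2-m)^2*(w^2-1)/(4*(m-1)*w^3) <= 3*(w^2-m)^2/(8*m*w)).
  { assert (E : 3*(w^2-m)^2/(8*m*w) - (w^2-m)^2*(w^2-1)/(4*(m-1)*w^3)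
               = (w^2-m)^2*((m-3)*w^2 + 2*m)/(8*m*(m-1)*w^3)) by (field; repeat split; lra).
    assert (0 <= (w^2-m)^2*((m-3)*w^2 + 2*m)/(8*m*(m-1)*w^3)).
    { apply div_nonneg.
      - apply Rmult_le_pos; [apply pow2_ge_0|]. assert (0 <= w^2) by apply pow2_ge_0. nra.
      - assert (0 < w^3) by (apply pow_lt; lra). repeat apply Rmult_lt_0_compat; lra. }
    lra. }
  set (t := w / u).
  assert (Hwt : w = t * u) by (unfold t; field; lra).
  assert (Ht : 9/10 <= t <= 5/4).
  { assert (0 <= (w - 9/10*u)/u) by (apply div_nonneg; lra).
    assert (0 <= (5/4*u - w)/u) by (apply div_nonneg; lra).
    assert (E1 : (w - 9/10*u)/u = t - 9/10) by (unfold t; field; lra).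
    assert (E2 : (5/4*u - w)/u = 5/4 - t) by (unfold t; field; lra).
    lra. }
  pose proof (ptau t Ht) as P.
  assert (T2 : w + m/w - 3*(w^2-m)^2/(8*m*w) - 9/5*u
              = u * (8*t^2 + 8 - 3*(t^2-1)^2 - 72/5*t) / (8*t)).
  { unfold m. rewrite Hwt. field. split; lra. }
  assert (0 < u * (8*t^2 + 8 - 3*(t^2-1)^2 - 72/5*t) / (8*t)).
  { apply Rdiv_lt_0_compat; [apply Rmult_lt_0_compat|]; lra. }
  lra.
Qed.

Lemma vertex A D E t : 0 < E -> A + D * t + / 2 * E * t ^ 2 >= A - D ^ 2 / (2 * E).
Proof.
  intros HE.
  assert (Eq : A + D * t + / 2 * E * t ^ 2 - (A - D ^ 2 / (2 * E)) = (E*t + D)^2 / (2*E))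
    by (field; lra).
  assert (0 <= (E*t + D)^2 / (2*E)) by (apply div_nonneg; [apply pow2_ge_0 | lra]).
  lra.
Qed.
Lemma alpha_lb n c x : 3 <= INR n -> 0 < c -> 0 <= x ->
  alpha n c x >= 2 * sqrt (INR n - 1) * c.
Proof.
  intros HN Hc Hx.
  set (u := sqrt (INR n - 1)).
  assert (Hu : 0 <= u) by apply sqrt_pos.
  assert (Huu : u * u = INR n - 1) by (apply sqrt_sqrt; lra).
  assert (EN : INR n = u*u + 1) by lra.
  assert (Hu1 : 1 <= u) by nra.
  unfold alpha.
  set (S := sqrt (x ^ 2 + 4 * (INR n - 1) * c * x)).
  assert (HS : 0 <= S) by apply sqrt_pos.
  assert (HSS : S * S = x ^ 2 + 4 * (INR n - 1) * c * x).
  { apply sqrt_sqrt. assert (0 <= x^2) by apply pow2_ge_0. assert (0 <= (INR n - 1) * c * x) by (apply Rmult_le_pos; [apply Rmult_le_pos|]; lra). lra. }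
  clearbody S. rewrite EN in *. clearbody u.
  set (L := 2*u*u*c*(u-1)^2 + (u*u+1)*x).
  assert (HL : 0 <= L).
  { unfold L; apply Rplus_le_le_0_compat; [repeat apply Rmult_le_pos; try lra; apply pow2_ge_0 | apply Rmult_le_pos; nra]. }
  assert (E : L^2 - (u*u-1)^2*(S*S) = 4*(u*u)*(x - u*(u-1)^2*c)^2) by (rewrite HSS; unfold L; ring).
  assert (Hk : (u*u-1)*S <= L).
  { assert (0 <= (u*u-1)*S) by (apply Rmult_le_pos; nra).
    assert (0 <= 4*(u*u)*(x - u*(u-1)^2*c)^2) by (apply Rmult_le_pos; [nra|apply pow2_ge_0]).
    nra. }
  assert (Hm : 0 < u*u) by nra.
  assert (G : (u*u+1)*c + (u*u+1)/(2*(u*u+1-1))*x - (u*u+1-2)/(2*(u*u+1-1))*S - 2*u*c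
            = (L - (u*u-1)*S)/(2*(u*u))) by (unfold L; field; lra).
  assert (0 <= (L - (u*u-1)*S)/(2*(u*u))).
  { unfold Rdiv; apply Rmult_le_pos; [lra| left; apply Rinv_0_lt_compat; lra]. }
  lra.
Qed.
Lemma horner_step a t B : 0 < a -> 0 <= t -> 0 <= B -> 0 < a + t * B.
Proof. intros; nra. Qed.
Lemma horner_step' a t B : 0 < a -> 0 <= t -> 0 <= B -> 0 <= a + t * B.
Proof. intros; nra. Qed.

Definition Gp (N m w : R) := (2*N-5)*m^2*(w+1)^6 - (N^2-4)^2*(3*(w+1)^2*w^2 + 4*w^3).

Lemma G_hi u : 17/10 <= u -> 0 < Gp (u*u+1) (u*u) (5/4*u).
Proof.
  intro Hu. set (t := u - 17/10). assert (Ht : 0 <= t) by (unfold t; lra).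
  replace u with (17/10 + t) by (unfold t; ring).
  match goal with |- 0 < ?X => replace X with ((1551143312650027/3276800000000) + t * ((36758357729697/2560000000) + t * ((576745521086041/8192000000) + t * ((27386562622979/163840000) + t * ((15573322307911/65536000) + t * ((451429469337/2048000) + t * ((28441379321/204800) + t * ((2467508773/40960) + t * ((584093265/32768) + t * ((3547325/1024) + t * ((830675/2048) + t * ((23875/1024) + t * ((625/2048)))))))))))))) by (unfold Gp; field) end.
  apply horner_step; [lra|exact Ht|]; repeat (apply horner_step'; [lra|exact Ht|]); lra.
Qed.

Lemma G_lo u : 17/10 <= u -> Gp (u*u+1) (u*u) (9/10*u) < 0.
Proof.
  intro Hu. set (t := u - 17/10). assert (Ht : 0 <= t) by (unfold t; lra).
  replace u with (17/10 + t) by (unfold t; ring).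
  apply Ropp_lt_cancel. rewrite Ropp_0.
  match goal with |- 0 < ?X => replace X with ((628343776897460423699/500000000000000000) + t * ((19817308555458858279/3125000000000000) + t * ((2345367884509623633/156250000000000) + t * ((546000304576843753/25000000000000) + t * ((228168759783976731/10000000000000) + t * ((5988247375163109/312500000000) + t * ((836186873837113/62500000000) + t * ((46425910767687/6250000000) + t * ((3069856550061/1000000000) + t * ((2779220889/3125000) + t * ((1054568727/6250000) + t * ((23343309/1250000) + t * ((452709/500000)))))))))))))) by (unfold Gp; field) end.
  apply horner_step; [lra|exact Ht|]; repeat (apply horner_step'; [lra|exact Ht|]); lra.
Qed.

Definition gz (n : nat) (z : R) := (2*INR n - 5)*z^3 - 3*(INR n^2-4)^2*z - 4*(INR n - 1)*(INR n^2-4)^2.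
Definition wy (n : nat) := (y_n n + 2*(INR n-1) + sqrt (y_n n^2 + 4*(INR n-1)*y_n n))/(2*(INR n-1)).

Lemma frac_mono w wl : 1 <= wl -> 1 <= w -> (wl+1)^2/wl < (w+1)^2/w -> wl < w.
Proof.
  intros H1 H2 H.
  assert (E : (w+1)^2/w - (wl+1)^2/wl = (w - wl)*(w*wl - 1)/(w*wl)) by (field; lra).
  destruct (Rlt_or_le wl w) as [|Hc]; [assumption|exfalso].
  assert (0 <= (wl - w)*(w*wl - 1)/(w*wl)).
  { apply div_nonneg; [apply Rmult_le_pos; nra | nra]. }
  assert (E2 : (wl - w)*(w*wl - 1)/(w*wl) = - ((w - wl)*(w*wl - 1)/(w*wl))) by (field; lra).
  lra.
Qed.

Lemma w_bracket n wl wh : (3 <= n)%nat -> 1 < wl -> wl < wh ->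
  gz n ((INR n-1)*(wl+1)^2/wl) < 0 -> 0 < gz n ((INR n-1)*(wh+1)^2/wh) ->
  0 < y_n n /\ wl < wy n /\ wy n < wh.
Proof.
  intros Hn Hl Hlh Hgl Hgh.
  assert (HN : 3 <= INR n) by (replace 3 with (INR 3) by (simpl; ring); apply le_INR; exact Hn).
  destruct (y_cubic n Hn) as [Hz Hg].
  set (m := INR n - 1) in *.
  assert (Hm : 1 < m) by (unfold m; lra).
  assert (HK : 0 < (INR n^2-4)^2) by (apply pow_lt; nra).
  assert (HB : 0 < 2*INR n - 5) by lra.
  assert (HL : 0 < 4*m*(INR n^2-4)^2) by (unfold m; apply Rmult_lt_0_compat; lra).
  unfold gz in Hgl, Hgh. fold m in Hgl, Hgh.
  set (zl := m*(wl+1)^2/wl) in *.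
  set (zh := m*(wh+1)^2/wh) in *.
  assert (Hzl : 4*m < zl).
  { assert (E : zl - 4*m = m*((wl-1)^2/wl)) by (unfold zl; field; lra).
    assert (0 < m*((wl-1)^2/wl)).
    { apply Rmult_lt_0_compat; [unfold m; lra|]. apply Rdiv_lt_0_compat; [|lra]. apply pow_lt; lra. }
    lra. }
  assert (Hzh : 0 <= zh).
  { unfold zh. apply div_nonneg; [|lra]. apply Rmult_le_pos; [unfold m; lra|apply pow2_ge_0]. }
  pose proof (bracket_lo _ _ _ _ zl HB HL Hz Hg ltac:(lra) Hgl) as Hlo.
  pose proof (bracket_hi _ _ _ _ zh HB HL Hz Hg Hzh Hgh) as Hhi.
  assert (Hy : 0 < y_n n) by lra.
  destruct (w_param n 1 (y_n n) ltac:(lra) ltac:(lra) Hy) as [Hw [Ey _]].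
  fold m in Hw, Ey. unfold wy. fold m.
  set (w := (y_n n + 2 * m + sqrt (y_n n ^ 2 + 4 * m * y_n n)) / (2 * m)) in *.
  assert (Ez : y_n n + 4*m = m*((w+1)^2/w)) by (rewrite Ey; field; lra).
  split; [exact Hy|split].
  - apply frac_mono; try lra.
    apply (Rmult_lt_reg_l m); [lra|].
    replace (m*((wl+1)^2/wl)) with zl by (unfold zl; field; lra). lra.
  - apply frac_mono; try lra.
    apply (Rmult_lt_reg_l m); [lra|].
    replace (m*((wh+1)^2/wh)) with zh by (unfold zh; field; lra). lra.
Qed.

Lemma Vmono m w wl wh : 1 < m -> 1 <= wl -> m <= wl*wl -> wl <= w <= wh ->
  w + m/w - (w^2-m)^2*(w^2-1)/(4*(m-1)*w^3) >=
  wl + m/wl - (wh^2-m)^2*(wh^2-1)/(4*(m-1)*wl^3).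
Proof.
  intros Hm H1 H2 [H3 H4].
  assert (A1 : w + m/w - (wl + m/wl) = (w - wl)*(w*wl - m)/(w*wl)) by (field; lra).
  assert (A2 : 0 <= (w - wl)*(w*wl - m)/(w*wl)) by (apply div_nonneg; [apply Rmult_le_pos; nra | nra]).
  assert (B1 : 0 <= w^2 - m) by nra.
  assert (B2 : w^2 - m <= wh^2 - m) by nra.
  assert (B3 : 0 <= w^2 - 1) by nra.
  assert (B4 : w^2 - 1 <= wh^2 - 1) by nra.
  assert (N1 : (w^2-m)^2*(w^2-1) <= (wh^2-m)^2*(wh^2-1)).
  { apply Rmult_le_compat; try nra. }
  assert (D1 : 0 < 4*(m-1)*wl^3) by (assert (0 < wl^3) by (apply pow_lt; lra); nra).
  assert (D2 : 4*(m-1)*wl^3 <= 4*(m-1)*w^3).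
  { apply Rmult_le_compat_l; [lra|]. apply pow_incr; lra. }
  assert (C : (w^2-m)^2*(w^2-1)/(4*(m-1)*w^3) <= (wh^2-m)^2*(wh^2-1)/(4*(m-1)*wl^3)).
  { unfold Rdiv. apply Rmult_le_compat.
    - apply Rmult_le_pos; [apply pow2_ge_0|lra].
    - left; apply Rinv_0_lt_compat; lra.
    - exact N1.
    - apply Rinv_le_contravar; lra. }
  lra.
Qed.

Lemma sqrt_le_q m q : 0 <= m -> 0 <= q -> m <= q*q -> sqrt m <= q.
Proof.
  intros H1 H2 H3. rewrite <- (sqrt_square q H2). apply sqrt_le_1_alt. exact H3.
Qed.

Lemma kn_conc n wl wh q : (4 <= n)%nat -> 1 < wl -> wl < wh ->
  gz n ((INR n-1)*(wl+1)^2/wl) < 0 -> 0 < gz n ((INR n-1)*(wh+1)^2/wh) ->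
  INR n - 1 <= wl*wl -> 0 <= q -> INR n - 1 <= q*q ->
  1999/1000*q < wl + (INR n - 1)/wl - (wh^2-(INR n - 1))^2*(wh^2-1)/(4*((INR n - 1)-1)*wl^3) ->
  k_n n > 1999/1000*sqrt (INR n - 1).
Proof.
  intros Hn H1 H2 Hgl Hgh Hwl Hq Hqq Hfin.
  assert (HN : 4 <= INR n) by (replace 4 with (INR 4) by (simpl; ring); apply le_INR; exact Hn).
  destruct (w_bracket n wl wh ltac:(lia) H1 H2 Hgl Hgh) as [Hy [Hlo Hhi]].
  destruct (w_param n 1 (y_n n) ltac:(lra) ltac:(lra) Hy) as [Hw [_ [Ea [Ed1 Ed2]]]].
  unfold wy in Hlo, Hhi.
  set (m := INR n - 1) in *.
  set (w := (y_n n + 2 * m + sqrt (y_n n ^ 2 + 4 * m * y_n n)) / (2 * m)) in *.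
  assert (Hk : k_n n = w + m/w - (w^2-m)^2*(w^2-1)/(4*(m-1)*w^3)).
  { unfold k_n. replace (Nat.eqb n 3) with false by (symmetry; apply Nat.eqb_neq; lia).
    replace (y_n n) with (y_n n * 1) by ring.
    rewrite Ea, Ed1, Ed2. assert (w^2-1 <> 0) by nra. assert (m-1 <> 0) by (unfold m; lra). field. repeat split; try lra. unfold m; lra. }
  rewrite Hk.
  pose proof (Vmono m w wl wh ltac:(unfold m; lra) ltac:(lra) Hwl ltac:(lra)) as HV.
  pose proof (sqrt_le_q m q ltac:(unfold m; lra) Hq Hqq).
  lra.
Qed.

Lemma gz_G n w : 0 < w -> gz n ((INR n - 1)*(w+1)^2/w) = (INR n - 1) * Gp (INR n) (INR n - 1) w / w^3.
Proof. intros. unfold gz, Gp. field. lra. Qed.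

Lemma beta_ge4 n c x : (4 <= n)%nat -> 0 < c -> beta n c x > 9/5 * sqrt (INR n - 1) * c.
Proof.
  intros Hn Hc.
  assert (HN : 4 <= INR n) by (replace 4 with (INR 4) by (simpl; ring); apply le_INR; exact Hn).
  set (u := sqrt (INR n - 1)).
  assert (Hu0 : 0 <= u) by apply sqrt_pos.
  assert (Huu : u * u = INR n - 1) by (apply sqrt_sqrt; lra).
  assert (Hu : 17/10 <= u) by nra.
  assert (EN : INR n = u*u + 1) by lra.
  assert (Hgl : gz n ((INR n-1)*(9/10*u+1)^2/(9/10*u)) < 0).
  { rewrite gz_G by lra. rewrite EN. replace (u*u+1-1) with (u*u) by ring.
    pose proof (G_lo u Hu).
    assert (0 < (9/10*u)^3) by (apply pow_lt; lra).
    unfold Rdiv. rewrite Rmult_assoc.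
    assert (0 < u*u) by nra.
    assert (0 < / (9/10*u)^3) by (apply Rinv_0_lt_compat; lra).
    assert (Gp (u * u + 1) (u * u) (9 / 10 * u) * / (9 / 10 * u) ^ 3 < 0) by nra.
    nra. }
  assert (Hgh : 0 < gz n ((INR n-1)*(5/4*u+1)^2/(5/4*u))).
  { rewrite gz_G by lra. rewrite EN. replace (u*u+1-1) with (u*u) by ring.
    pose proof (G_hi u Hu).
    assert (0 < (5/4*u)^3) by (apply pow_lt; lra).
    apply Rdiv_lt_0_compat; [|lra]. apply Rmult_lt_0_compat; nra. }
  destruct (w_bracket n (9/10*u) (5/4*u) ltac:(lia) ltac:(lra) ltac:(lra) Hgl Hgh) as [Hy [Hlo Hhi]].
  destruct (w_param n c (y_n n) ltac:(lra) Hc Hy) as [Hw [_ [Ea [Ed1 Ed2]]]].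
  unfold wy in Hlo, Hhi.
  set (m := INR n - 1) in *.
  set (w := (y_n n + 2 * m + sqrt (y_n n ^ 2 + 4 * m * y_n n)) / (2 * m)) in *.
  assert (Hm : m = u*u) by (unfold m; lra).
  assert (Hw2 : 0 < w^2 - 1) by nra.
  assert (HE : 0 < alpha_d2 n c (x0 n c)).
  { unfold x0. rewrite Ed2. apply Rdiv_lt_0_compat.
    - assert (0 < w^3) by (apply pow_lt; lra). assert (0 < m - 1) by (unfold m; lra). nra.
    - apply Rmult_lt_0_compat; [apply Rmult_lt_0_compat; [lra| apply pow_lt; unfold m; lra]|apply pow_lt; lra]. }
  pose proof (vertex (alpha n c (x0 n c)) (alpha_d1 n c (x0 n c)) (alpha_d2 n c (x0 n c)) (x - x0 n c) HE) as HV.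
  unfold beta.
  assert (Hval : alpha n c (x0 n c) - alpha_d1 n c (x0 n c) ^ 2 / (2 * alpha_d2 n c (x0 n c))
     = c * (w + u*u/w - (w^2-u*u)^2*(w^2-1)/(4*(u*u-1)*w^3))).
  { unfold x0. rewrite Ea, Ed1, Ed2. rewrite Hm. field.
    assert (0 < u*u - 1) by nra. repeat split; lra. }
  pose proof (V_gen u w Hu ltac:(nra) ltac:(lra)).
  assert (c * (w + u*u/w - (w^2-u*u)^2*(w^2-1)/(4*(u*u-1)*w^3)) > c * (9/5*u)) by (apply Rmult_lt_compat_l; lra).
  fold u. lra.
Qed.

Lemma F3 w : 2 <= w <= 3 ->
  w + 2/w - (w^2-2)*(w-1)/(w*(w+1)) + w*(w-1)/(w+1)^3 > 9/5 * (141422/100000).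
Proof.
  intros [H1 H2].
  assert (E : w + 2/w - (w^2-2)*(w-1)/(w*(w+1)) + w*(w-1)/(w+1)^3 - 9/5 * (141422/100000)
    = ((w^2+2)*(w+1)^3 - (w^2-2)*(w-1)*(w+1)^2 + w^2*(w-1) - 9/5*(141422/100000)*w*(w+1)^3)/(w*(w+1)^3))
    by (field; lra).
  assert (P : 0 < (w^2+2)*(w+1)^3 - (w^2-2)*(w-1)*(w+1)^2 + w^2*(w-1) - 9/5*(141422/100000)*w*(w+1)^3).
  { assert (0 <= (w-2)*(3-w)) by nra. nra. }
  assert (0 < ((w^2+2)*(w+1)^3 - (w^2-2)*(w-1)*(w+1)^2 + w^2*(w-1) - 9/5*(141422/100000)*w*(w+1)^3)/(w*(w+1)^3)).
  { apply Rdiv_lt_0_compat; [exact P|]. assert (0 < (w+1)^3) by (apply pow_lt; lra). nra. }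
  lra.
Qed.

Lemma beta_3 c x : 0 < c -> 0 <= x -> beta 3 c x > 9/5 * sqrt (INR 3 - 1) * c.
Proof.
  intros Hc Hx.
  assert (E3 : INR 3 = 3) by (simpl; lra).
  destruct (w_bracket 3 (24826129/10000000) (2482613/1000000) ltac:(lia) ltac:(lra) ltac:(lra)
     ltac:(unfold gz; rewrite E3; lra) ltac:(unfold gz; rewrite E3; lra)) as [Hy [Hlo Hhi]].
  destruct (w_param 3 c (y_n 3) ltac:(lra) Hc Hy) as [Hw [Ey [Ea [Ed1 Ed2]]]].
  unfold wy in Hlo, Hhi.
  rewrite E3 in *.
  set (w := (y_n 3 + 2 * (3 - 1) + sqrt (y_n 3 ^ 2 + 4 * (3 - 1) * y_n 3)) / (2 * (3 - 1))) in *.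
  assert (Hsq : sqrt (3 - 1) <= 141422/100000) by (apply sqrt_le_q; lra).
  unfold beta, x0. rewrite Ea, Ed1, Ed2.
  set (y := y_n 3) in *. clearbody w y.
  subst y.
  assert (Hw1 : 0 < w^2 - 1) by nra.
  assert (Hw3 : 0 < (w+1)^3) by (apply pow_lt; lra).
  set (D := (w ^ 2 - (3 - 1)) / ((3 - 1) * (w ^ 2 - 1))).
  set (Ee := 2 * (3 - 1 - 1) * w ^ 3 / (c * (3 - 1) ^ 2 * (w ^ 2 - 1) ^ 3)).
  set (y := (3 - 1) * (w - 1) ^ 2 / w).
  assert (HE : 0 < Ee).
  { unfold Ee. apply Rdiv_lt_0_compat. assert (0 < w^3) by (apply pow_lt; lra). nra.
    apply Rmult_lt_0_compat; [nra|apply pow_lt; lra]. }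
  assert (Split : c * (w + (3 - 1) / w) + D * (x - y * c) + / 2 * Ee * (x - y * c) ^ 2
     = c * (w + 2/w - (w^2-2)*(w-1)/(w*(w+1)) + w*(w-1)/(w+1)^3)
       + x * ((w^2-2)*(w+1)^2 - 2*w^2) / (2*(w-1)*(w+1)^3) + / 2 * Ee * x^2).
  { unfold D, Ee, y. field. repeat split; try lra; nra. }
  rewrite Split.
  pose proof (F3 w ltac:(lra)) as HF.
  assert (0 <= x * ((w^2-2)*(w+1)^2 - 2*w^2) / (2*(w-1)*(w+1)^3)).
  { apply div_nonneg; [apply Rmult_le_pos; [lra|nra] | nra]. }
  assert (0 <= / 2 * Ee * x^2) by (assert (0 <= x^2) by apply pow2_ge_0; nra).
  assert (c * (w + 2/w - (w^2-2)*(w-1)/(w*(w+1)) + w*(w-1)/(w+1)^3) > c * (9/5 * (141422/100000)))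
    by (apply Rmult_lt_compat_l; lra).
  assert (0 <= sqrt (3-1)) by apply sqrt_pos.
  nra.
Qed.
Lemma part2 : forall n : nat, (5 <= n <= 9)%nat -> k_n n > 1999 / 1000 * sqrt (INR n - 1).
Proof.
  intros n Hn.
  assert (n = 5 \/ n = 6 \/ n = 7 \/ n = 8 \/ n = 9)%nat as HH by lia.
  destruct HH as [H|[H|[H|[H|H]]]]; subst n.
  - assert (E : INR 5 = 5) by (simpl; lra).
    apply (kn_conc 5 (4303971/2000000) (1344991/625000) 2); try lia; try (unfold gz; rewrite E); lra.
  - assert (E : INR 6 = 6) by (simpl; lra).
    apply (kn_conc 6 (23093073/10000000) (11546537/5000000) (2236068/1000000)); try lia; try (unfold gz; rewrite E); lra.
  - assert (E : INR 7 = 7) by (simpl; lra).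
    apply (kn_conc 7 (24826129/10000000) (2482613/1000000) (2449490/1000000)); try lia; try (unfold gz; rewrite E); lra.
  - assert (E : INR 8 = 8) by (simpl; lra).
    apply (kn_conc 8 (26580641/10000000) (13290321/5000000) (2645752/1000000)); try lia; try (unfold gz; rewrite E); lra.
  - assert (E : INR 9 = 9) by (simpl; lra).
    apply (kn_conc 9 (28310709/10000000) (2831071/1000000) (2828428/1000000)); try lia; try (unfold gz; rewrite E); lra.
Qed.

Lemma part3 : k_n 10 = 6.
Proof.
  assert (E : INR 10 = 10) by (simpl; lra).
  destruct (y_cubic 10 ltac:(lia)) as [Hz Hg].
  rewrite E in Hz, Hg.
  assert (Hy : y_n 10 + 4 * (10 - 1) = 48).
  { apply (cub_uniq (2*10-5) (3*(10^2-4)^2) (4*(10-1)*(10^2-4)^2)); try lra. }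
  assert (Y : y_n 10 = 12) by lra.
  unfold k_n. simpl Nat.eqb. cbv iota.
  unfold alpha, alpha_d1, alpha_d2. rewrite Y, E.
  assert (S : sqrt (12 ^ 2 + 4 * (10 - 1) * 1 * 12) = 24) by (apply sqrt_lem_1; lra).
  rewrite S. field.
Qed.

Theorem mainTheorem9 :
  (forall (n : nat) (c x : R), (3 <= n)%nat -> 0 < c -> 0 <= x ->
     gamma n c x > 9 / 5 * sqrt (INR n - 1) * c)
  /\ (forall n : nat, (5 <= n <= 9)%nat -> k_n n > 1999 / 1000 * sqrt (INR n - 1))
  /\ k_n 10 = 6.
Proof.
  split; [|split; [exact part2 | exact part3]].
  intros n c x Hn Hc Hx.
  assert (HN : 3 <= INR n) by (replace 3 with (INR 3) by (simpl; ring); apply le_INR; exact Hn).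
  unfold gamma. destruct (Rle_dec (x0 n c) x) as [H|H].
  - pose proof (alpha_lb n c x HN Hc Hx).
    assert (0 < sqrt (INR n - 1)) by (apply sqrt_lt_R0; lra).
    assert (0 < sqrt (INR n - 1) * c) by (apply Rmult_lt_0_compat; lra).
    lra.
  - destruct (Nat.eq_dec n 3) as [->|Hne].
    + apply beta_3; assumption.
    + apply beta_ge4; [lia | exact Hc].
Qed.
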